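(* Let $k\ne\ell$ in $\{1,\dots,r\}$, and assume all indices appearing below (as subscripts, including those needed to define the coefficients) lie in $\mathfrak C_{2r}$ and are normal. Then (1) $\alpha_{\bm n;\bm m}\beta_{\bm n;\bm m}+\sum_{j=1}^r\rho_{\bm n;\bm m,j}=1$; (2) $\alpha_{\bm n+\bm e_k;\bm m}-\alpha_{\bm n+\bm e_\ell;\bm m}=\alpha_{\bm n;\bm m}\gamma^{k\ell}_{\bm n;\bm m}$; (3) $\beta_{\bm n+\bm e_\ell;\bm m}-\beta_{\bm n+\bm e_k;\bm m}=\beta_{\bm n+\bm e_\ell+\bm e_k;\bm m}\gamma^{k\ell}_{\bm n;\bm m}$; (4) $\rho_{\bm n;\bm m,k}\gamma^{k\ell}_{\bm n;\bm m}=\rho_{\bm n+\bm e_\ell;\bm m,k}\gamma^{k\ell}_{\bm n-\bm e_k;\bm m}$; and similarly (1') $\alpha_{\bm n;\bm m}\beta_{\bm n;\bm m}+\sum_{j=1}^r\sigma_{\bm n;\bm m,j}=1$; (2') $\alpha_{\bm n;\bm m+\bm e_\ell}-\alpha_{\bm n;\bm m+\bm e_k}=\alpha_{\bm n;\bm m+\bm e_\ell+\bm e_k}\eta^{k\ell}_{\bm n;\bm m}$; (3') $\beta_{\bm n;\bm m+\bm e_k}-\beta_{\bm n;\bm m+\bm e_\ell}=\beta_{\bm n;\bm m}\eta^{k\ell}_{\bm n;\bm m}$; (4') $\sigma_{\bm n;\bm m,k}\eta^{k\ell}_{\bm n;\bm m}=\sigma_{\bm n;\bm m+\bm e_\ell,k}\eta^{k\ell}_{\bm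 n;\bm m-\bm e_k}$. (In (1) the normality requirement concerns $(\bm n;\bm m)$ and every $(\bm n-\bm e_j;\bm m)$ lying in $\mathfrak C_{2r}$; in (1') it concerns $(\bm n;\bm m)$ and every $(\bm n;\bm m-\bm e_j)$ lying in $\mathfrak C_{2r}$.)
   Context: Fix $r\ge1$; $\bm e_j$ is the $j$-th standard unit vector of $\mathbb Z^r$; for $\bm v\in\mathbb Z^r$, $|\bm v|=v_1+\dots+v_r$ (signed). Let $c_{k,j}\in\mathbb C$ and $L_j$ the linear functional on complex Laurent polynomials with $L_j[w^{-k}]=c_{k,j}$ ($k\in\mathbb Z$, $1\le j\le r$). $\mathfrak C_{2r}=\{(\bm n;\bm m)\in\mathbb Z^r\times\mathbb Z^r:n_j+m_j\ge0\ \forall j\}$. For $(\bm n;\bm m)\in\mathfrak C_{2r}$, $\bm n\ne-\bm m$, $T_{\bm n;\bm m}$ is the square matrix of size $|\bm n|+|\bm m|$ with rows indexed by $(j,k)$, $1\le j\le r$, $-m_j\le k\le n_j-1$ (ordered by $j$, then increasing $k$), columns indexed by $i=-|\bm m|,\dots,|\bm n|-1$, entries $c_{k-i,j}$; $T_{\bm n;-\bm n}:=1$; normal means $\det T_{\bm n;\bm m}\ne0$. For normal $(\bm n;\bm m)$, $\bm n\ne-\bm m$: $\Phi_{\bm n;\bm m}$ is the unique Laurent polynomial in $\operatorname{span}\{z^k\}_{k=-|\bm m|}^{|\bm n|}$ with $z^{|\bm n|}$-coefficient $1$ and $L_j[\Phi_{\bm n;\bm m}(w)w^{-k}]=0$ for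 $-m_j\le k\le n_j-1$, all $j$; $\Phi^*_{\bm n;\bm m}$ is the unique one in that span with $z^{-|\bm m|}$-coefficient $1$ and $L_j[\Phi^*_{\bm n;\bm m}(w)w^{-k}]=0$ for $-m_j+1\le k\le n_j$; for $\bm n=-\bm m$, $\Phi=\Phi^*=1$. $\alpha_{\bm n;\bm m}$ := $z^{-|\bm m|}$-coefficient of $\Phi_{\bm n;\bm m}$, $\beta_{\bm n;\bm m}$ := $z^{|\bm n|}$-coefficient of $\Phi^*_{\bm n;\bm m}$. Recurrence coefficients: $\rho_{\bm n;\bm m,j}=L_j[\Phi_{\bm n;\bm m}(w)w^{-n_j}]/L_j[\Phi_{\bm n-\bm e_j;\bm m}(w)w^{-n_j+1}]$ if $(\bm n-\bm e_j;\bm m)\in\mathfrak C_{2r}$, and $\rho_{\bm n;\bm m,j}=0$ otherwise; $\sigma_{\bm n;\bm m,j}=L_j[\Phi^*_{\bm n;\bm m}(w)w^{m_j}]/L_j[\Phi^*_{\bm n;\bm m-\bm e_j}(w)w^{m_j-1}]$ if $(\bm n;\bm m-\bm e_j)\in\mathfrak C_{2r}$, and $0$ otherwise (these are the coefficients of the recurrences $\Phi_{\bm n;\bm m}(z)=\alpha_{\bm n;\bm m}\Phi^*_{\bm n;\bm m}(z)+\sum_j\rho_{\bm n;\bm m,j}z\Phi_{\bm n-\bm e_j;\bm m}(z)$ and $\Phi^*_{\bm n;\bm m}(z)=\beta_{\bm n;\bm m}\Phi_{\bm n;\bm m}(z)+\sum_j\sigma_{\bm n;\bm m,j}z^{-1}\Phi^*_{\bm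 n;\bm m-\bm e_j}(z)$). For $k\ne\ell$: $\gamma^{k\ell}_{\bm n;\bm m}=L_\ell[\Phi_{\bm n+\bm e_k;\bm m}(w)w^{-n_\ell}]/L_\ell[\Phi_{\bm n;\bm m}(w)w^{-n_\ell}]$, the number with $\Phi_{\bm n+\bm e_k;\bm m}-\Phi_{\bm n+\bm e_\ell;\bm m}=\gamma^{k\ell}_{\bm n;\bm m}\Phi_{\bm n;\bm m}$; $\eta^{k\ell}_{\bm n;\bm m}=L_\ell[\Phi^*_{\bm n;\bm m+\bm e_k}(w)w^{m_\ell}]/L_\ell[\Phi^*_{\bm n;\bm m}(w)w^{m_\ell}]$, the number with $\Phi^*_{\bm n;\bm m+\bm e_k}-\Phi^*_{\bm n;\bm m+\bm e_\ell}=\eta^{k\ell}_{\bm n;\bm m}\Phi^*_{\bm n;\bm m}$. *)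

(* Defs.v *)
From HB Require Import structures.
From mathcomp Require Import all_boot all_order all_algebra.
From mathcomp Require Import reals.
From mathcomp Require Import complex.
From Stdlib Require Import ClassicalEpsilon.
Set Implicit Arguments. Unset Strict Implicit. Unset Printing Implicit Defensive.
Import Order.TTheory GRing.Theory Num.Theory.
Local Open Scope ring_scope.

Section MOP.
Variable C : fieldType.
Variable r : nat.

Definition mi := 'I_r -> int.

Definition ev (j : 'I_r) : mi := fun i => (i == j)%:Z.
Definition vadd (v w : mi) : mi := fun i => v i + w i.
Definition vsub (v w : mi) : mi := fun i => v i - w i.
Definition vopp (v : mi) : mi := fun i => - v i.

Definition vnorm (v : mi) : int := \sum_(i < r) v i.

Definition inC2r (n m : mi) : bool := [forall j, 0 <= n j + m j].

Definition irange (lo hi : int) : seq int :=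
  [seq lo + (t%:Z) | t <- iota 0 (if lo <= hi then absz (hi - lo) else 0%N)].

(* c k j stands for c_{k,j} = L_j[w^{-k}] *)
Variable c : int -> 'I_r -> C.

(* A Laurent polynomial is represented as z^d * p(z) with d : int and
   p : {poly C}.  Lw j d p k = L_j[ w^d p(w) * w^{-k} ]
   = sum_i p_i L_j[w^{d+i-k}] = sum_i p_i c_{k-d-i,j}. *)
Definition Lw (j : 'I_r) (d : int) (p : {poly C}) (k : int) : C :=
  \sum_(i < size p) p`_i * c (k - d - (i%:Z)) j.

Definition dimT (n m : mi) : nat := absz (vnorm n + vnorm m).

Definition Trows (n m : mi) : seq ('I_r * int) :=
  flatten [seq [seq (j, k) | k <- irange (- m j) (n j)] | j <- enum 'I_r].

(* T_{n;m}: entry in row (j,k), column i (i = -|m|, ..., |n|-1) is c_{k-i,j} *)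
Definition Tmat (n m : mi) : 'M[C]_(dimT n m) :=
  \matrix_(a < dimT n m, b < dimT n m)
    nth 0 [seq c (rw.2 - (b%:Z - vnorm m)) rw.1 | rw <- Trows n m] a.

(* normality; T_{n;-n} := 1 *)
Definition normal (n m : mi) : Prop :=
  if [forall j, n j == - m j] then True else \det (Tmat n m) != 0.

(* Phi_{n;m} = z^{-|m|} p(z), deg p <= |n|+|m|, coefficient of z^{|n|}
   (i.e. p_{|n|+|m|}) equal to 1, and L_j[Phi w^{-k}] = 0, -m_j <= k <= n_j-1 *)
Definition isPhi (n m : mi) (p : {poly C}) : Prop :=
  (size p <= (dimT n m).+1)%N /\ p`_(dimT n m) = 1 /\
  forall j k, k \in irange (- m j) (n j) -> Lw j (- vnorm m) p k = 0.

(* Phi*_{n;m} = z^{-|m|} p(z), coefficient of z^{-|m|} (= p_0) equal to 1,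
   L_j[Phi* w^{-k}] = 0 for -m_j+1 <= k <= n_j *)
Definition isPhiS (n m : mi) (p : {poly C}) : Prop :=
  (size p <= (dimT n m).+1)%N /\ p`_0 = 1 /\
  forall j k, k \in irange (- m j + 1) (n j + 1) -> Lw j (- vnorm m) p k = 0.

(* "the unique" such polynomial (well defined for normal indices) *)
Definition Phi (n m : mi) : {poly C} :=
  epsilon (inhabits (0 : {poly C})) (isPhi n m).
Definition PhiS (n m : mi) : {poly C} :=
  epsilon (inhabits (0 : {poly C})) (isPhiS n m).

(* alpha: coefficient of z^{-|m|} in Phi; beta: coefficient of z^{|n|} in Phi* *)
Definition alpha (n m : mi) : C := (Phi n m)`_0.
Definition beta (n m : mi) : C := (PhiS n m)`_(dimT n m).

Definition rho (n m : mi) (j : 'I_r) : C :=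
  if inC2r (vsub n (ev j)) m then
    Lw j (- vnorm m) (Phi n m) (n j) /
    Lw j (- vnorm m) (Phi (vsub n (ev j)) m) (n j - 1)
  else 0.

Definition sigma (n m : mi) (j : 'I_r) : C :=
  if inC2r n (vsub m (ev j)) then
    Lw j (- vnorm m) (PhiS n m) (- m j) /
    Lw j (- vnorm (vsub m (ev j))) (PhiS n (vsub m (ev j))) (- (m j - 1))
  else 0.

Definition gamma (k l : 'I_r) (n m : mi) : C :=
  Lw l (- vnorm m) (Phi (vadd n (ev k)) m) (n l) /
  Lw l (- vnorm m) (Phi n m) (n l).

Definition etac (k l : 'I_r) (n m : mi) : C :=
  Lw l (- vnorm (vadd m (ev k))) (PhiS n (vadd m (ev k))) (- m l) /
  Lw l (- vnorm m) (PhiS n m) (- m l).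

Definition good (n m : mi) : Prop := inC2r n m /\ normal n m.

End MOP.

(* Main.v *)
Require Import Defs.
From mathcomp Require Import all_boot all_order all_algebra.
From mathcomp Require Import ring lra zify.
From mathcomp Require Import reals.
From mathcomp Require Import complex.
From Stdlib Require Import ClassicalEpsilon FunctionalExtensionality.
Set Implicit Arguments. Unset Strict Implicit. Unset Printing Implicit Defensive.
Import Order.TTheory GRing.Theory Num.Theory.
Local Open Scope ring_scope.



Section S.
Variable C : fieldType.
Variable r : nat.
Variable c : int -> 'I_r -> C.

Definition M (j : 'I_r) (p : {poly C}) (t : int) : C :=
  \sum_(i < size p) p`_i * c (t - i%:Z) j.

Lemma LwE j d (p : {poly C}) k : Lw c j d p k = M j p (k - d).
Proof. by []. Qed.

Lemma M_widen j (p : {poly C}) t B : (size p <= B)%N ->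
  M j p t = \sum_(i < B) p`_i * c (t - i%:Z) j.
Proof.
move=> H; rewrite /M (big_ord_widen B (fun i : nat => p`_i * c (t - i%:Z) j) H).
rewrite big_mkcond; apply: eq_bigr => i _; case: ltnP => // H'.
by rewrite nth_default // mul0r.
Qed.

Lemma M_add j (p q : {poly C}) t : M j (p + q) t = M j p t + M j q t.
Proof.
pose B := maxn (size p) (size q).
rewrite (M_widen _ _ (B:=B)) ?(leq_trans (size_polyD _ _)) //.
rewrite (M_widen _ _ (B:=B)) ?leq_maxl // (M_widen _ _ (B:=B)) ?leq_maxr //.
by rewrite -big_split; apply: eq_bigr => i _; rewrite coefD mulrDl.
Qed.

Lemma M_scale j a (p : {poly C}) t : M j (a *: p) t = a * M j p t.
Proof.
rewrite (M_widen _ _ (B:=size p)) ?size_scale_leq // /M mulr_sumr.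
by apply: eq_bigr => i _; rewrite coefZ mulrA.
Qed.

Lemma M_0 j t : M j 0 t = 0.
Proof. by rewrite /M size_poly0 big_ord0. Qed.

Lemma M_opp j (p : {poly C}) t : M j (- p) t = - M j p t.
Proof. by rewrite -scaleN1r M_scale mulN1r. Qed.

Lemma M_sub j (p q : {poly C}) t : M j (p - q) t = M j p t - M j q t.
Proof. by rewrite M_add M_opp. Qed.

Lemma M_sum j (F : 'I_r -> {poly C}) t :
  M j (\sum_(i < r) F i) t = \sum_(i < r) M j (F i) t.
Proof.
apply: (big_morph (fun p => M j p t)); first by move=> p q; rewrite M_add.
by rewrite M_0.
Qed.

Lemma size_Xmul (p : {poly C}) : (size ('X * p)%R <= (size p).+1)%N.
Proof.
have [->|Hp] := eqVneq p 0; first by rewrite mulr0 size_poly0.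
by rewrite mulrC size_mulX.
Qed.

Lemma M_X j (p : {poly C}) t : M j ('X * p) t = M j p (t - 1).
Proof.
rewrite (M_widen _ _ (B:=(size p).+1)) ?size_Xmul // big_ord_recl coefXM /= mul0r add0r.
rewrite /M; apply: eq_bigr => i _; rewrite coefXM /=.
congr (_ * c _ j); rewrite /bump /=. lia.
Qed.

Lemma coef_top (p : {poly C}) N : (size p <= N)%N -> p`_N = 0.
Proof. by move=> H; rewrite nth_default. Qed.

Lemma size_le_pred (p : {poly C}) N : (size p <= N.+1)%N -> p`_N = 0 -> (size p <= N)%N.
Proof.
rewrite leq_eqVlt => /orP [/eqP Hs H0|] //.
have : lead_coef p = 0 by rewrite lead_coefE Hs.
by move/eqP; rewrite lead_coef_eq0 => /eqP ->; rewrite size_poly0.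
Qed.

Lemma Xdiv (p : {poly C}) : p`_0 = 0 -> exists p', p = 'X * p' /\ (size p' <= (size p).-1)%N.
Proof.
move=> H0; exists (\poly_(i < (size p).-1) p`_i.+1); split; last exact: size_poly.
apply/polyP => i; rewrite coefXM; case: i => [|i] //= ; rewrite coef_poly.
case: ltnP => // Hi; rewrite nth_default //; lia.
Qed.

Lemma size_sum_le (F : 'I_r -> {poly C}) B : (forall i, size (F i) <= B)%N ->
  (size (\sum_(i < r) F i)%R <= B)%N.
Proof.
move=> H; apply: (big_ind (fun p : {poly C} => size p <= B)%N) => //.
- by rewrite size_poly0.
- by move=> x y Hx Hy; apply: leq_trans (size_polyD _ _) _; rewrite geq_max Hx Hy.
Qed.

Lemma size_sub_le (p q : {poly C}) B : (size p <= B)%N -> (size q <= B)%N -> (size (p - q)%R <= B)%N.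
Proof. by move=> Hp Hq; apply: leq_trans (size_polyD _ _) _; rewrite size_polyN geq_max Hp Hq. Qed.

Lemma size_scale_le a (p : {poly C}) B : (size p <= B)%N -> (size (a *: p)%R <= B)%N.
Proof. by move=> H; apply: leq_trans (size_scale_leq _ _) H. Qed.

End S.


Section S2.
Variable r : nat.

Lemma mem_irange lo hi k : (k \in irange lo hi) = (lo <= k < hi).
Proof.
rewrite /irange; case: ifP => Hle.
- apply/mapP/idP.
  + case=> t; rewrite mem_iota add0n => /andP [_ Ht] ->.
    have E : (`|hi - lo|%N)%:Z = hi - lo by rewrite gez0_abs // subr_ge0.
    apply/andP; split; first by rewrite lerDl.
    move: Ht; rewrite -(ltz_nat t) E => Ht; lia.
  + move=> /andP [H1 H2]; exists `|k - lo|%N.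
    * rewrite mem_iota add0n /= -(ltz_nat _) !gez0_abs ?subr_ge0 //; lia.
    * rewrite gez0_abs ?subr_ge0 //; ring.
- apply/mapP/idP; first by case=> t; rewrite mem_iota add0n ltn0 andbF.
  move=> /andP [H1 H2]; exfalso; move: Hle; lia.
Qed.

Lemma size_irange lo hi : size (irange lo hi) = if lo <= hi then `|hi - lo|%N else 0%N.
Proof. by rewrite /irange size_map size_iota. Qed.

Lemma mem_Trows (n m : mi r) j k : ((j, k) \in Trows n m) = (- m j <= k < n j).
Proof.
apply/idP/idP.
- rewrite /Trows => /allpairsPdep [j' [k' [_ Hk [-> ->]]]].
  by rewrite -mem_irange.
- move=> H; rewrite /Trows; apply/allpairsPdep; exists j, k; split => //.
  + by rewrite mem_enum.
  + by rewrite mem_irange.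
Qed.

Lemma vnorm_ev (j : 'I_r) : vnorm (ev j) = 1.
Proof.
rewrite /vnorm (bigD1 j) //= /ev eqxx big1 ?addr0 // => i /negPf ->; by [].
Qed.

Lemma vnorm_add (v w : mi r) : vnorm (vadd v w) = vnorm v + vnorm w.
Proof. by rewrite /vnorm -big_split. Qed.

Lemma vnorm_sub (v w : mi r) : vnorm (vsub v w) = vnorm v - vnorm w.
Proof. by rewrite /vnorm /vsub big_split /= sumrN. Qed.

Lemma inC2rP (n m : mi r) : reflect (forall j, 0 <= n j + m j) (inC2r n m).
Proof. exact: forallP. Qed.

Lemma inC2r_ge0 (n m : mi r) : inC2r n m -> 0 <= vnorm n + vnorm m.
Proof.
move/inC2rP => H; rewrite /vnorm -big_split; apply: sumr_ge0 => i _; exact: H.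
Qed.

Lemma dimTz (n m : mi r) : inC2r n m -> (dimT n m)%:Z = vnorm n + vnorm m.
Proof. by move=> H; rewrite /dimT gez0_abs // inC2r_ge0. Qed.

Lemma size_Trows (n m : mi r) : inC2r n m -> size (Trows n m) = dimT n m.
Proof.
move=> H; apply/eqP; rewrite -eqz_nat dimTz //; apply/eqP.
rewrite /Trows size_allpairs_dep sumnE big_map.
rewrite -natz natr_sum /vnorm -big_split /= big_enum /=.
apply: eq_bigr => j _; rewrite size_irange.
move/inC2rP: H => /(_ j) H.
have -> : - m j <= n j by lia.
rewrite natz gez0_abs; [ring | lia].
Qed.

Lemma mi_ext (v w : mi r) : (forall i, v i = w i) -> v = w.
Proof. move=> H; exact: functional_extensionality. Qed.

Lemma vsubK (n : mi r) j : vadd (vsub n (ev j)) (ev j) = n.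
Proof. by apply: mi_ext => i; rewrite /vadd /vsub subrK. Qed.

Lemma vaddK (n : mi r) j : vsub (vadd n (ev j)) (ev j) = n.
Proof. by apply: mi_ext => i; rewrite /vadd /vsub addrK. Qed.

Lemma vsubaddC (n : mi r) j k : vadd (vsub n (ev j)) (ev k) = vsub (vadd n (ev k)) (ev j).
Proof. by apply: mi_ext => i; rewrite /vadd /vsub addrAC. Qed.

Lemma vaddC2 (n : mi r) j k : vadd (vadd n (ev j)) (ev k) = vadd (vadd n (ev k)) (ev j).
Proof. by apply: mi_ext => i; rewrite /vadd addrAC. Qed.

Lemma evE (i j : 'I_r) : ev j i = (i == j)%:Z.
Proof. by []. Qed.

End S2.


Section S3.
Variable C : fieldType.
Variable r : nat.
Variable hr : (0 < r)%N.
Variable c : int -> 'I_r -> C.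

Let x0 : 'I_r * int := (Ordinal hr, 0).

Lemma good_unit n m : good c n m -> Tmat c n m \in unitmx.
Proof.
case=> Hc; rewrite /normal; case: ifP => [Hall _ | _ H].
- have E : dimT n m = 0%N.
    apply/eqP; rewrite -eqz_nat dimTz // /vnorm -big_split /=; apply/eqP.
    rewrite big1 // => i _; move/forallP: Hall => /(_ i) /eqP ->; ring.
  rewrite unitmxE; move: (Tmat c n m); rewrite E => A; by rewrite det_mx00 unitr1.
- by rewrite unitmxE unitfE.
Qed.

Lemma Trow n m (a : 'I_(dimT n m)) b : inC2r n m ->
  Tmat c n m a b = c ((nth x0 (Trows n m) a).2 + vnorm m - (nat_of_ord b)%:Z) (nth x0 (Trows n m) a).1.
Proof.
move=> H; rewrite mxE (nth_map x0) ?size_Trows //; congr c; ring.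
Qed.

Lemma core_uniq n m : good c n m -> forall q : {poly C}, (size q <= dimT n m)%N ->
  (forall j k, - m j <= k < n j -> M c j q (k + vnorm m) = 0) -> q = 0.
Proof.
move=> G q Hs Hc; have U := good_unit G; have Hin := G.1.
pose v := \col_(b < dimT n m) q`_b.
have Hv : Tmat c n m *m v = 0.
  apply/matrixP => a z; rewrite !mxE.
  set x := nth x0 (Trows n m) a.
  have Hx : x \in Trows n m by rewrite mem_nth // size_Trows.
  have : (- m x.1 <= x.2 < n x.1) by rewrite -mem_Trows -surjective_pairing.
  move/Hc => H0; apply: (etrans _ H0); rewrite (M_widen _ _ _ Hs); apply: eq_bigr => b _.
  by rewrite Trow // mxE mulrC.
have Hv0 : v = 0 by rewrite -(mulKmx U v) Hv mulmx0.
apply/polyP => i; rewrite coef0; case: (ltnP i (dimT n m)) => Hi.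
- by have := congr1 (fun A : 'cV[C]_(dimT n m) => A (Ordinal Hi) ord0) Hv0; rewrite !mxE.
- by rewrite nth_default // (leq_trans Hs).
Qed.

Lemma core_exists n m : good c n m -> forall g : 'I_r -> int -> C,
  exists q : {poly C}, (size q <= dimT n m)%N /\
  forall j k, - m j <= k < n j -> M c j q (k + vnorm m) = g j k.
Proof.
move=> G g; have U := good_unit G; have Hin := G.1.
pose w := \col_(a < dimT n m) g (nth x0 (Trows n m) a).1 (nth x0 (Trows n m) a).2.
pose v := invmx (Tmat c n m) *m w.
pose q := \poly_(i < dimT n m) (\sum_(b < dimT n m | nat_of_ord b == i) v b ord0).
exists q; split; first exact: size_poly.
move=> j k Hjk.
have Hmem : (j, k) \in Trows n m by rewrite mem_Trows.
have Hidx : (index (j, k) (Trows n m) < dimT n m)%N by rewrite -size_Trows // index_mem.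
pose a := Ordinal Hidx.
have Ha : nth x0 (Trows n m) a = (j, k) := nth_index x0 Hmem.
have : (Tmat c n m *m v) a ord0 = w a ord0 by rewrite mulKVmx.
rewrite mxE [w a ord0]mxE Ha /= => <-.
rewrite (@M_widen _ _ c _ q _ (dimT n m)) ?size_poly //; apply: eq_bigr => b _.
rewrite coef_poly ltn_ord (big_pred1 b); last first.
  by move=> b' /=; apply/eqP/eqP => [/val_inj|->].
by rewrite Trow // Ha /= mulrC.
Qed.

End S3.


Section S4a.
Variable r : nat.
Lemma vadd_eq (n : mi r) j : vadd n (ev j) j = n j + 1.
Proof. by rewrite /vadd evE eqxx. Qed.
Lemma vadd_neq (n : mi r) i j : i != j -> vadd n (ev j) i = n i.
Proof. by move=> H; rewrite /vadd evE (negPf H) addr0. Qed.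
Lemma vsub_eq (n : mi r) j : vsub n (ev j) j = n j - 1.
Proof. by rewrite /vsub evE eqxx. Qed.
Lemma vsub_neq (n : mi r) i j : i != j -> vsub n (ev j) i = n i.
Proof. by move=> H; rewrite /vsub evE (negPf H) subr0. Qed.

Lemma dimT_eq (n m n' m' : mi r) d : inC2r n m ->
  vnorm n' + vnorm m' = vnorm n + vnorm m + d%:Z -> dimT n' m' = (dimT n m + d)%N.
Proof. by move=> H E; rewrite /dimT E -(dimTz H) -PoszD absz_nat. Qed.
End S4a.

Section S4.
Variable C : fieldType.
Variable r : nat.
Variable hr : (0 < r)%N.
Variable c : int -> 'I_r -> C.

Lemma PhiP n m : good c n m ->
  [/\ (size (Phi c n m) <= (dimT n m).+1)%N, (Phi c n m)`_(dimT n m) = 1 &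
   forall j k, - m j <= k < n j -> M c j (Phi c n m) (k + vnorm m) = 0].
Proof.
move=> G.
have E : isPhi c n m (Phi c n m).
  rewrite /Phi; apply: epsilon_spec.
  have [q [Hs Hq]] := core_exists hr G (fun j k => - M c j 'X^(dimT n m) (k + vnorm m)).
  exists (q + 'X^(dimT n m)); split; [|split].
  - apply: leq_trans (size_polyD _ _) _; rewrite size_polyXn geq_max leqnn andbT.
    exact: leq_trans Hs (leqnSn _).
  - by rewrite coefD coefXn eqxx nth_default // add0r.
  - move=> j k; rewrite mem_irange => Hk; rewrite LwE opprK M_add Hq // addNr //.
case: E => Hs [Ht Hc]; split => // j k Hk; have := Hc j k.
by rewrite mem_irange LwE opprK; apply.
Qed.

Lemma PhiU n m : good c n m -> forall q : {poly C}, (size q <= (dimT n m).+1)%N ->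
  (forall j k, - m j <= k < n j -> M c j q (k + vnorm m) = 0) ->
  q = q`_(dimT n m) *: Phi c n m.
Proof.
move=> G q Hs Hc; case: (PhiP G) => Ps Pt Pc.
apply/eqP; rewrite -subr_eq0; apply/eqP; apply: (core_uniq hr G).
- apply: size_le_pred; first exact: size_sub_le Hs (size_scale_le _ Ps).
  by rewrite coefB coefZ Pt mulr1 subrr.
- by move=> j k Hk; rewrite M_sub M_scale Hc // Pc // mulr0 subr0.
Qed.

Lemma PhiSP n m : good c n m ->
  [/\ (size (PhiS c n m) <= (dimT n m).+1)%N, (PhiS c n m)`_0 = 1 &
   forall j k, - m j + 1 <= k < n j + 1 -> M c j (PhiS c n m) (k + vnorm m) = 0].
Proof.
move=> G.
have E : isPhiS c n m (PhiS c n m).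
  rewrite /PhiS; apply: epsilon_spec.
  have [q [Hs Hq]] := core_exists hr G (fun j k => - M c j 1 (k + 1 + vnorm m)).
  exists (1 + 'X * q); split; [|split].
  - apply: leq_trans (size_polyD _ _) _; rewrite size_poly1 geq_max /=.
    exact: leq_trans (size_Xmul _) _.
  - by rewrite coefD coefC coefXM /= addr0.
  - move=> j k; rewrite mem_irange => Hk; rewrite LwE opprK M_add M_X.
    have -> : k + vnorm m - 1 = (k - 1) + vnorm m by ring.
    rewrite Hq; last by lia.
    have -> : k - 1 + 1 + vnorm m = k + vnorm m by ring.
    by rewrite addrN.
case: E => Hs [Ht Hc]; split => // j k Hk; have := Hc j k.
by rewrite mem_irange LwE opprK; apply.
Qed.

Lemma PhiSU n m : good c n m -> forall q : {poly C}, (size q <= (dimT n m).+1)%N ->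
  (forall j k, - m j + 1 <= k < n j + 1 -> M c j q (k + vnorm m) = 0) ->
  q = q`_0 *: PhiS c n m.
Proof.
move=> G q Hs Hc; case: (PhiSP G) => Ps Pt Pc.
set d := q - q`_0 *: PhiS c n m.
have d0 : d`_0 = 0 by rewrite coefB coefZ Pt mulr1 subrr.
have [d' [Ed Hd']] := Xdiv d0.
have Hsd : (size d <= (dimT n m).+1)%N := size_sub_le Hs (size_scale_le _ Ps).
have Hd0 : d' = 0.
  apply: (core_uniq hr G).
  - by apply: leq_trans Hd' _; rewrite -ltnS; case: (size d) Hsd.
  - move=> j k Hk.
    have : M c j d (k + 1 + vnorm m) = 0.
      by rewrite /d M_sub M_scale Hc ?Pc ?mulr0 ?subr0 //; lia.
    rewrite Ed M_X; have -> : k + 1 + vnorm m - 1 = k + vnorm m by ring.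
    done.
by move: Ed; rewrite Hd0 mulr0 /d => /eqP; rewrite subr_eq0 => /eqP.
Qed.

Lemma den_n n m j : good c n m -> good c (vadd n (ev j)) m ->
  M c j (Phi c n m) (n j + vnorm m) != 0.
Proof.
move=> G G'; apply/negP => /eqP H0; case: (PhiP G) => Ps Pt Pc.
have Hdim : dimT (vadd n (ev j)) m = (dimT n m + 1)%N.
  by apply: dimT_eq G.1 _; rewrite vnorm_add vnorm_ev; ring.
have := PhiU G' (q := Phi c n m).
rewrite Hdim addn1 nth_default ?scale0r //.
move=> H; move: Pt; rewrite H //; first by rewrite coef0 => /eqP; rewrite eq_sym oner_eq0.
- exact: leq_trans Ps (leqnSn _).
- move=> i k; case: (eqVneq i j) => [->|Hij].
  + rewrite vadd_eq => Hk; have [->|Hne] := eqVneq k (n j); first exact: H0.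
    by apply: Pc; lia.
  + by rewrite vadd_neq // => Hk; apply: Pc.
Qed.

Lemma den_m n m j : good c n m -> good c n (vadd m (ev j)) ->
  M c j (PhiS c n m) (- m j + vnorm m) != 0.
Proof.
move=> G G'; apply/negP => /eqP H0; case: (PhiSP G) => Ps Pt Pc.
have Hdim : dimT n (vadd m (ev j)) = (dimT n m + 1)%N.
  by apply: dimT_eq G.1 _; rewrite vnorm_add vnorm_ev; ring.
have := PhiSU G' (q := 'X * PhiS c n m).
rewrite Hdim addn1 coefXM /= scale0r => H.
have HX : 'X * PhiS c n m = 0.
  apply: H; first exact: leq_trans (size_Xmul _) _.
  move=> i k; rewrite M_X vnorm_add vnorm_ev.
  have -> : k + (vnorm m + 1) - 1 = k + vnorm m by ring.
  case: (eqVneq i j) => [->|Hij].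
  + rewrite vadd_eq => Hk; have [->|Hne] := eqVneq k (- m j); first exact: H0.
    by apply: Pc; lia.
  + by rewrite vadd_neq // => Hk; apply: Pc.
move/eqP: HX; rewrite mulf_eq0 polyX_eq0 /= => /eqP HS.
by move: Pt; rewrite HS coef0 => /eqP; rewrite eq_sym oner_eq0.
Qed.

End S4.


Ltac zl := intros; repeat match goal with H : is_true (_ && _) |- _ => case/andP: H => ? ? end;
  try (apply/andP; split); lia.

Section S5a.
Variable r : nat.
Lemma inC2r_subn (n m : mi r) i : inC2r n m -> 1 <= n i + m i -> inC2r (vsub n (ev i)) m.
Proof.
move=> /inC2rP H H1; apply/inC2rP => j; case: (eqVneq j i) => [->|Hji].
- by rewrite vsub_eq; zl.
- by rewrite vsub_neq //; apply: H.
Qed.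
Lemma inC2r_subm (n m : mi r) i : inC2r n m -> 1 <= n i + m i -> inC2r n (vsub m (ev i)).
Proof.
move=> /inC2rP H H1; apply/inC2rP => j; case: (eqVneq j i) => [->|Hji].
- by rewrite vsub_eq; zl.
- by rewrite vsub_neq //; apply: H.
Qed.
End S5a.

Section S5.
Variable C : fieldType.
Variable r : nat.
Variable hr : (0 < r)%N.
Variable c : int -> 'I_r -> C.

Lemma rhoE n m j : inC2r (vsub n (ev j)) m -> rho c n m j =
  M c j (Phi c n m) (n j + vnorm m) / M c j (Phi c (vsub n (ev j)) m) (n j - 1 + vnorm m).
Proof. by move=> H; rewrite /rho H !LwE !opprK. Qed.

Lemma rho0 n m j : ~~ inC2r (vsub n (ev j)) m -> rho c n m j = 0.
Proof. by move=> H; rewrite /rho (negPf H). Qed.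

Lemma sigmaE n m j : inC2r n (vsub m (ev j)) -> sigma c n m j =
  M c j (PhiS c n m) (- m j + vnorm m) / M c j (PhiS c n (vsub m (ev j))) (- m j + vnorm m).
Proof.
move=> H; rewrite /sigma H !LwE !opprK vnorm_sub vnorm_ev.
by have -> : - (m j - 1) + (vnorm m - 1) = - m j + vnorm m by ring.
Qed.

Lemma sigma0 n m j : ~~ inC2r n (vsub m (ev j)) -> sigma c n m j = 0.
Proof. by move=> H; rewrite /sigma (negPf H). Qed.

Lemma gammaE k l n m : gamma c k l n m =
  M c l (Phi c (vadd n (ev k)) m) (n l + vnorm m) / M c l (Phi c n m) (n l + vnorm m).
Proof. by rewrite /gamma !LwE !opprK. Qed.

Lemma etacE k l n m : etac c k l n m =
  M c l (PhiS c n (vadd m (ev k))) (- m l + vnorm m + 1) / M c l (PhiS c n m) (- m l + vnorm m).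
Proof. by rewrite /etac !LwE !opprK vnorm_add vnorm_ev addrA. Qed.

Lemma id1 n m : good c n m ->
  (forall j, inC2r (vsub n (ev j)) m -> normal c (vsub n (ev j)) m) ->
  alpha c n m * beta c n m + \sum_(j < r) rho c n m j = 1.
Proof.
move=> G Hn; case: (PhiP hr G) => Ps Pt Pc; case: (PhiSP hr G) => Ss St Sc.
have Gj : forall j, inC2r (vsub n (ev j)) m -> good c (vsub n (ev j)) m.
  by move=> j H; split => //; apply: Hn.
have Dj : forall j, inC2r (vsub n (ev j)) m -> dimT n m = (dimT (vsub n (ev j)) m).+1.
  move=> j H; rewrite -addn1; apply: dimT_eq H _; rewrite vnorm_sub vnorm_ev; ring.
pose T j := if inC2r (vsub n (ev j)) m then rho c n m j *: ('X * Phi c (vsub n (ev j)) m) else 0.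
pose q := Phi c n m - \sum_(j < r) T j - alpha c n m *: PhiS c n m.
have Tsize : forall j, (size (T j) <= (dimT n m).+1)%N.
  move=> j; rewrite /T; case: ifP => H; last by rewrite size_poly0.
  apply: size_scale_le; apply: leq_trans (size_Xmul _) _; rewrite ltnS (Dj j H).
  by case: (PhiP hr (Gj j H)).
have Hq : q = q`_0 *: PhiS c n m.
  apply: (PhiSU hr G).
  - apply: size_sub_le; last exact: size_scale_le.
    by apply: size_sub_le => //; apply: size_sum_le.
  - move=> i k Hk; rewrite /q !M_sub M_scale Sc // mulr0 subr0 M_sum.
    have HT : forall j, k < (if j == i then n i else n i + 1) -> M c i (T j) (k + vnorm m) = 0.
      move=> j Hkj; rewrite /T; case: ifP => H; last by rewrite M_0.
      rewrite M_scale M_X; case: (PhiP hr (Gj j H)) => _ _ Qc.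
      have -> : k + vnorm m - 1 = (k - 1) + vnorm m by ring.
      rewrite Qc ?mulr0 //; move: Hkj; case: (eqVneq i j) => [<-|Hij].
      + by rewrite vsub_eq /=; zl.
      + by rewrite vsub_neq //=; zl.
    have [Hkn|Hkn] := ltrP k (n i).
    + rewrite Pc; last by zl.
      rewrite big1 ?subrr // => j _; apply: HT; case: ifP => _; zl.
    + have Ek : k = n i by zl.
      rewrite (bigD1 i) //= big1 ?addr0; last first.
        by move=> j /negPf Hji; apply: HT; rewrite Hji /=; zl.
      have Hv : inC2r (vsub n (ev i)) m by apply: inC2r_subn G.1 _; zl.
      rewrite /T Hv M_scale M_X rhoE // Ek.
      have -> : n i + vnorm m - 1 = n i - 1 + vnorm m by ring.
      rewrite divfK ?subrr //.
      have := den_n hr (Gj i Hv) (j := i); rewrite vsubK vsub_eq; apply; exact: G.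
have q0 : q`_0 = 0.
  rewrite /q !coefB coefZ St mulr1 coef_sum big1 ?subr0 ?subrr //.
  by move=> j _; rewrite /T; case: ifP => _; rewrite ?coef0 // coefZ coefXM mulr0.
move: Hq; rewrite q0 scale0r /q => Hq.
have := congr1 (fun p : {poly C} => p`_(dimT n m)) Hq => /=.
rewrite !coefB coefZ Pt coef0 coef_sum.
have -> : \sum_(j < r) (T j)`_(dimT n m) = \sum_(j < r) rho c n m j.
  apply: eq_bigr => j _; rewrite /T; case: ifP => H.
  - rewrite coefZ coefXM (Dj j H) /=; case: (PhiP hr (Gj j H)) => _ -> _; exact: mulr1.
  - by rewrite coef0 rho0 // H.
move/eqP; rewrite subr_eq0 => /eqP H1; rewrite [beta c n m]/beta -H1; ring.
Qed.

End S5.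



Section S6a.
Variable r : nat.
Lemma vaddE (n : mi r) i j : vadd n (ev j) i = n i + (if i == j then 1 else 0).
Proof. by rewrite /vadd evE; case: (i == j). Qed.
Lemma vsubE (n : mi r) i j : vsub n (ev j) i = n i - (if i == j then 1 else 0).
Proof. by rewrite /vsub evE; case: (i == j). Qed.
End S6a.

Ltac vz := rewrite ?vaddE ?vsubE ?eqxx /=; repeat case: ifP => _; zl.

Section S6.
Variable C : fieldType.
Variable r : nat.
Variable hr : (0 < r)%N.
Variable c : int -> 'I_r -> C.

Lemma G2 n m k l : k != l -> good c n m -> good c (vadd n (ev k)) m -> good c (vadd n (ev l)) m ->
  Phi c (vadd n (ev k)) m - Phi c (vadd n (ev l)) m = gamma c k l n m *: Phi c n m.
Proof.
move=> kl G Gk Gl.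
have Dk : dimT (vadd n (ev k)) m = ((dimT n m).+1)%N.
  by rewrite -addn1; apply: dimT_eq G.1 _; rewrite vnorm_add vnorm_ev; ring.
have Dl : dimT (vadd n (ev l)) m = ((dimT n m).+1)%N.
  by rewrite -addn1; apply: dimT_eq G.1 _; rewrite vnorm_add vnorm_ev; ring.
case: (PhiP hr G) => Ps Pt Pc; case: (PhiP hr Gk) => Pks Pkt Pkc; case: (PhiP hr Gl) => Pls Plt Plc.
rewrite Dk in Pks Pkt; rewrite Dl in Pls Plt.
have HG := G.1; move/inC2rP: HG => HG.
set D := Phi c (vadd n (ev k)) m - Phi c (vadd n (ev l)) m.
have HD : D = D`_(dimT n m) *: Phi c n m.
  apply: (PhiU hr G).
  - apply: size_le_pred; first exact: size_sub_le.
    by rewrite coefB Pkt Plt subrr.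
  - move=> i k' Hk; rewrite /D M_sub Pkc ?Plc ?subrr //; vz.
rewrite HD; congr (_ *: _).
have den := den_n hr G Gl (j := l).
rewrite gammaE; apply: (canRL (mulfK den)); rewrite -M_scale -HD /D M_sub.
rewrite (Plc l (n l)) ?subr0 //; have := HG l; vz.
Qed.

Lemma id2 n m k l : k != l -> good c n m -> good c (vadd n (ev k)) m -> good c (vadd n (ev l)) m ->
  alpha c (vadd n (ev k)) m - alpha c (vadd n (ev l)) m = alpha c n m * gamma c k l n m.
Proof.
move=> kl G Gk Gl; have := congr1 (fun p : {poly C} => p`_0) (G2 kl G Gk Gl).
by rewrite /= coefB coefZ mulrC.
Qed.


Lemma id3 n m k l : k != l -> good c n m -> good c (vadd n (ev k)) m -> good c (vadd n (ev l)) m ->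
  good c (vadd (vadd n (ev l)) (ev k)) m ->
  beta c (vadd n (ev l)) m - beta c (vadd n (ev k)) m
    = beta c (vadd (vadd n (ev l)) (ev k)) m * gamma c k l n m.
Proof.
move=> kl G Gk Gl GN.
have Dk : dimT (vadd n (ev k)) m = ((dimT n m).+1)%N.
  by rewrite -addn1; apply: dimT_eq G.1 _; rewrite vnorm_add vnorm_ev; ring.
have Dl : dimT (vadd n (ev l)) m = ((dimT n m).+1)%N.
  by rewrite -addn1; apply: dimT_eq G.1 _; rewrite vnorm_add vnorm_ev; ring.
have DN : dimT (vadd (vadd n (ev l)) (ev k)) m = ((dimT n m).+2)%N.
  by rewrite -addn2; apply: dimT_eq G.1 _; rewrite !vnorm_add !vnorm_ev; ring.
have lk : l != k by rewrite eq_sym.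
case: (PhiP hr G) => Ps Pt Pc; case: (PhiP hr Gk) => Pks Pkt Pkc.
case: (PhiSP hr Gk) => Sks Skt Skc; case: (PhiSP hr Gl) => Sls Slt Slc.
case: (PhiSP hr GN) => SNs SNt SNc.
rewrite Dk in Pks Pkt Sks; rewrite Dl in Sls; rewrite DN in SNs.
have HG := G.1; move/inC2rP: HG => HG.
rewrite /beta Dk Dl DN.
set bk := (PhiS c (vadd n (ev k)) m)`_(dimT n m).+1.
set bl := (PhiS c (vadd n (ev l)) m)`_(dimT n m).+1.
set bN := (PhiS c (vadd (vadd n (ev l)) (ev k)) m)`_(dimT n m).+2.
set D := PhiS c (vadd n (ev k)) m - PhiS c (vadd n (ev l)) m.
have D0 : D`_0 = 0 by rewrite coefB Skt Slt subrr.
have [D' [ED HD's]] := Xdiv D0.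
have HDs : (size D <= (dimT n m).+2)%N by apply: size_sub_le.
have HD' : D' = D'`_(dimT n m) *: Phi c n m.
  apply: (PhiU hr G).
  - by apply: leq_trans HD's _; rewrite -ltnS; case: (size D) HDs.
  - move=> i k' Hk.
    have : M c i D (k' + 1 + vnorm m) = 0.
      rewrite /D M_sub Skc ?Slc ?subrr //; vz.
    by rewrite ED M_X; have -> : k' + 1 + vnorm m - 1 = k' + vnorm m by ring.
have D'N : D'`_(dimT n m) = bk - bl.
  by rewrite /bk /bl -coefB -/D ED coefXM.
have EqA : M c l (PhiS c (vadd n (ev k)) m) (n l + 1 + vnorm m)
    = (bk - bl) * M c l (Phi c n m) (n l + vnorm m).
  have : M c l D (n l + 1 + vnorm m) = M c l (PhiS c (vadd n (ev k)) m) (n l + 1 + vnorm m).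
    rewrite /D M_sub (Slc l (n l + 1)) ?subr0 //; have := HG l; vz.
  move <-; rewrite ED M_X HD' M_scale D'N.
  by have -> : n l + 1 + vnorm m - 1 = n l + vnorm m by ring.
set E := PhiS c (vadd (vadd n (ev l)) (ev k)) m - bN *: ('X * Phi c (vadd n (ev k)) m).
have HE : E = E`_0 *: PhiS c (vadd n (ev k)) m.
  apply: (PhiSU hr Gk).
  - rewrite Dk; apply: size_le_pred.
    + by apply: size_sub_le => //; apply: size_scale_le; apply: leq_trans (size_Xmul _) _.
    + by rewrite coefB coefZ coefXM /= Pkt mulr1 subrr.
  - move=> i k' Hk; rewrite /E M_sub M_scale M_X.
    have -> : k' + vnorm m - 1 = (k' - 1) + vnorm m by ring.
    rewrite SNc ?Pkc ?mulr0 ?subrr //; move: Hk; vz.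
have E0 : E`_0 = 1 by rewrite coefB coefZ coefXM /= SNt mulr0 subr0.
have EqB : M c l (PhiS c (vadd n (ev k)) m) (n l + 1 + vnorm m)
    = - bN * M c l (Phi c (vadd n (ev k)) m) (n l + vnorm m).
  rewrite -[PhiS c (vadd n (ev k)) m]scale1r -E0 -HE /E M_sub M_scale M_X.
  rewrite (SNc l (n l + 1)); last by have := HG l; vz.
  have -> : n l + 1 + vnorm m - 1 = n l + vnorm m by ring.
  ring.
have den := den_n hr G Gl (j := l).
rewrite gammaE mulrA; apply: (canRL (mulfK den)).
have := EqA; rewrite EqB => H.
transitivity (- ((bk - bl) * M c l (Phi c n m) (n l + vnorm m))); first ring.
by rewrite -H; ring.
Qed.


Lemma id4 n m k l : k != l -> good c n m -> good c (vsub n (ev k)) m -> good c (vadd n (ev k)) m ->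
  good c (vadd n (ev l)) m -> good c (vsub (vadd n (ev l)) (ev k)) m ->
  rho c n m k * gamma c k l n m
    = rho c (vadd n (ev l)) m k * gamma c k l (vsub n (ev k)) m.
Proof.
move=> kl G G' Gk Gl GU.
have lk : l != k by rewrite eq_sym.
have HG := G.1; move/inC2rP: HG => HG.
have HG' := G'.1; move/inC2rP: HG' => HG'.
case: (PhiP hr G) => Ps Pt Pc; case: (PhiP hr Gk) => Pks Pkt Pkc.
have R1 := G2 kl G Gk Gl.
have G'k : good c (vadd (vsub n (ev k)) (ev k)) m by rewrite vsubK.
have G'l : good c (vadd (vsub n (ev k)) (ev l)) m by rewrite vsubaddC.
have R2 := G2 kl G' G'k G'l.
rewrite vsubK vsubaddC in R2.
set A := M c k (Phi c n m) (n k + vnorm m).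
set B := M c k (Phi c (vsub n (ev k)) m) (n k - 1 + vnorm m).
set F := M c k (Phi c (vadd n (ev l)) m) (n k + vnorm m).
set Gv := M c k (Phi c (vsub (vadd n (ev l)) (ev k)) m) (n k - 1 + vnorm m).
have HA : - F = gamma c k l n m * A.
  have := congr1 (fun p => M c k p (n k + vnorm m)) R1.
  rewrite /= M_sub M_scale (Pkc k (n k)) ?sub0r //; have := HG k; vz.
have HB : - Gv = gamma c k l (vsub n (ev k)) m * B.
  have := congr1 (fun p => M c k p (n k - 1 + vnorm m)) R2.
  rewrite /= M_sub M_scale (Pc k (n k - 1)) ?sub0r //; have := HG' k; vz.
have Bn : B != 0.
  have := den_n hr G' G'k (j := k); rewrite vsub_eq; exact.
have Gn : Gv != 0.
  have GUk : good c (vadd (vsub (vadd n (ev l)) (ev k)) (ev k)) m by rewrite vsubK.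
  have := den_n hr GU GUk (j := k); rewrite vsub_eq vadd_neq //; exact.
rewrite (@rhoE _ _ c n m k) ?G'.1 // (@rhoE _ _ c (vadd n (ev l)) m k); last by rewrite -vsubaddC; exact: G'l.1.
rewrite vadd_neq // -/A -/B -/F -/Gv.
have Hg : gamma c k l (vsub n (ev k)) m = - Gv / B by rewrite HB mulfK.
rewrite Hg; transitivity (- F / B).
  by rewrite HA; ring.
by rewrite !mulNr mulrN mulrA divfK.
Qed.

End S6.



Section S7.
Variable C : fieldType.
Variable r : nat.
Variable hr : (0 < r)%N.
Variable c : int -> 'I_r -> C.

Lemma id1' n m : good c n m ->
  (forall j, inC2r n (vsub m (ev j)) -> normal c n (vsub m (ev j))) ->
  alpha c n m * beta c n m + \sum_(j < r) sigma c n m j = 1.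
Proof.
move=> G Hn; case: (PhiP hr G) => Ps Pt Pc; case: (PhiSP hr G) => Ss St Sc.
have Gj : forall j, inC2r n (vsub m (ev j)) -> good c n (vsub m (ev j)).
  by move=> j H; split => //; apply: Hn.
have Dj : forall j, inC2r n (vsub m (ev j)) -> dimT n m = (dimT n (vsub m (ev j))).+1.
  move=> j H; rewrite -addn1; apply: dimT_eq H _; rewrite vnorm_sub vnorm_ev; ring.
pose T j := if inC2r n (vsub m (ev j)) then sigma c n m j *: PhiS c n (vsub m (ev j)) else 0.
pose q := PhiS c n m - beta c n m *: Phi c n m - \sum_(j < r) T j.
have Tsize : forall j, (size (T j) <= dimT n m)%N.
  move=> j; rewrite /T; case: ifP => H; last by rewrite size_poly0.
  apply: size_scale_le; rewrite (Dj j H).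
  by case: (PhiSP hr (Gj j H)).
have Hq : q = q`_(dimT n m) *: Phi c n m.
  apply: (PhiU hr G).
  - apply: size_sub_le; last by apply: size_sum_le => j; apply: leq_trans (Tsize j) _.
    by apply: size_sub_le => //; apply: size_scale_le.
  - move=> i k Hk; rewrite /q !M_sub M_scale Pc // mulr0 subr0 M_sum.
    have HT : forall j, (if j == i then - m i + 1 else - m i) <= k -> M c i (T j) (k + vnorm m) = 0.
      move=> j Hkj; rewrite /T; case: ifP => H; last by rewrite M_0.
      rewrite M_scale; case: (PhiSP hr (Gj j H)) => _ _ Uc.
      have -> : k + vnorm m = (k + 1) + vnorm (vsub m (ev j)).
        by rewrite vnorm_sub vnorm_ev; ring.
      rewrite Uc ?mulr0 //; move: Hkj; case: (eqVneq j i) => [->|Hij].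
      + by rewrite vsub_eq /=; zl.
      + by rewrite vsub_neq 1?eq_sym //=; zl.
    have [Hkn|Hkn] := ltrP (- m i) k.
    + rewrite Sc; last by zl.
      rewrite big1 ?subrr // => j _; apply: HT; case: ifP => _; zl.
    + have Ek : k = - m i by zl.
      rewrite (bigD1 i) //= big1 ?addr0; last first.
        by move=> j /negPf Hji; apply: HT; rewrite Hji /=; zl.
      have Hv : inC2r n (vsub m (ev i)) by apply: inC2r_subm G.1 _; zl.
      rewrite /T Hv M_scale sigmaE // Ek.
      rewrite divfK ?subrr //.
      have := den_m hr (Gj i Hv) (j := i); rewrite vsubK vsub_eq vnorm_sub vnorm_ev.
      have -> : - (m i - 1) + (vnorm m - 1) = - m i + vnorm m by ring.
      apply; exact: G.
have qN : q`_(dimT n m) = 0.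
  rewrite /q !coefB coefZ Pt mulr1 coef_sum big1 ?subr0 ?subrr //.
  by move=> j _; rewrite nth_default.
move: Hq; rewrite qN scale0r /q => Hq.
have := congr1 (fun p : {poly C} => p`_0) Hq => /=.
rewrite !coefB coefZ St coef0 coef_sum.
have -> : \sum_(j < r) (T j)`_0 = \sum_(j < r) sigma c n m j.
  apply: eq_bigr => j _; rewrite /T; case: ifP => H.
  - rewrite coefZ; case: (PhiSP hr (Gj j H)) => _ -> _; exact: mulr1.
  - by rewrite coef0 sigma0 // H.
move/eqP; rewrite subr_eq0 => /eqP H1.
have -> : alpha c n m * beta c n m = beta c n m * (Phi c n m)`_0 by rewrite mulrC.
rewrite -(subrK (\sum_(j < r) sigma c n m j) (_ * _)) -H1; ring.
Qed.


Lemma G3' n m k l : k != l -> good c n m -> good c n (vadd m (ev k)) -> good c n (vadd m (ev l)) ->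
  PhiS c n (vadd m (ev k)) - PhiS c n (vadd m (ev l)) = etac c k l n m *: ('X * PhiS c n m).
Proof.
move=> kl G Gk Gl.
have Dk : dimT n (vadd m (ev k)) = ((dimT n m).+1)%N.
  by rewrite -addn1; apply: dimT_eq G.1 _; rewrite vnorm_add vnorm_ev; ring.
have Dl : dimT n (vadd m (ev l)) = ((dimT n m).+1)%N.
  by rewrite -addn1; apply: dimT_eq G.1 _; rewrite vnorm_add vnorm_ev; ring.
case: (PhiSP hr G) => Ss St Sc; case: (PhiSP hr Gk) => Sks Skt Skc; case: (PhiSP hr Gl) => Sls Slt Slc.
rewrite Dk in Sks; rewrite Dl in Sls.
rewrite vnorm_add vnorm_ev in Skc; rewrite vnorm_add vnorm_ev in Slc.
have HG := G.1; move/inC2rP: HG => HG.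
set D := PhiS c n (vadd m (ev k)) - PhiS c n (vadd m (ev l)).
have D0 : D`_0 = 0 by rewrite coefB Skt Slt subrr.
have [D' [ED HD's]] := Xdiv D0.
have HDs : (size D <= (dimT n m).+2)%N by apply: size_sub_le.
have HD' : D' = D'`_0 *: PhiS c n m.
  apply: (PhiSU hr G).
  - by apply: leq_trans HD's _; rewrite -ltnS; case: (size D) HDs.
  - move=> i k' Hk.
    have : M c i D (k' + (vnorm m + 1)) = 0.
      rewrite /D M_sub Skc ?Slc ?subrr //; vz.
    by rewrite ED M_X; have -> : k' + (vnorm m + 1) - 1 = k' + vnorm m by ring.
set a := D'`_0 in HD' *.
rewrite ED HD' -scalerAr; congr (_ *: _).
have den := den_m hr G Gl (j := l).
rewrite etacE; apply: (canRL (mulfK den)).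
have : M c l D (- m l + (vnorm m + 1)) = M c l (PhiS c n (vadd m (ev k))) (- m l + (vnorm m + 1)).
  rewrite /D M_sub (Slc l (- m l)) ?subr0 //; have := HG l; vz.
rewrite ED M_X HD' M_scale addrA => <-.
by have -> : - m l + vnorm m + 1 - 1 = - m l + vnorm m by ring.
Qed.

Lemma id3' n m k l : k != l -> good c n m -> good c n (vadd m (ev k)) -> good c n (vadd m (ev l)) ->
  beta c n (vadd m (ev k)) - beta c n (vadd m (ev l)) = beta c n m * etac c k l n m.
Proof.
move=> kl G Gk Gl.
have Dk : dimT n (vadd m (ev k)) = ((dimT n m).+1)%N.
  by rewrite -addn1; apply: dimT_eq G.1 _; rewrite vnorm_add vnorm_ev; ring.
have Dl : dimT n (vadd m (ev l)) = ((dimT n m).+1)%N.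
  by rewrite -addn1; apply: dimT_eq G.1 _; rewrite vnorm_add vnorm_ev; ring.
have := congr1 (fun p : {poly C} => p`_(dimT n m).+1) (G3' kl G Gk Gl).
by rewrite /= coefB coefZ coefXM /= /beta Dk Dl mulrC.
Qed.


Lemma id2' n m k l : k != l -> good c n m -> good c n (vadd m (ev k)) -> good c n (vadd m (ev l)) ->
  good c n (vadd (vadd m (ev l)) (ev k)) ->
  alpha c n (vadd m (ev l)) - alpha c n (vadd m (ev k))
    = alpha c n (vadd (vadd m (ev l)) (ev k)) * etac c k l n m.
Proof.
move=> kl G Gk Gl GN.
have Dk : dimT n (vadd m (ev k)) = ((dimT n m).+1)%N.
  by rewrite -addn1; apply: dimT_eq G.1 _; rewrite vnorm_add vnorm_ev; ring.
have Dl : dimT n (vadd m (ev l)) = ((dimT n m).+1)%N.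
  by rewrite -addn1; apply: dimT_eq G.1 _; rewrite vnorm_add vnorm_ev; ring.
have DN : dimT n (vadd (vadd m (ev l)) (ev k)) = ((dimT n m).+2)%N.
  by rewrite -addn2; apply: dimT_eq G.1 _; rewrite !vnorm_add !vnorm_ev; ring.
have lk : l != k by rewrite eq_sym.
case: (PhiSP hr G) => Ss St Sc; case: (PhiSP hr Gk) => Sks Skt Skc.
case: (PhiP hr Gk) => Pks Pkt Pkc; case: (PhiP hr Gl) => Pls Plt Plc.
case: (PhiP hr GN) => PNs PNt PNc.
rewrite Dk in Pks Pkt Sks; rewrite Dl in Pls Plt; rewrite DN in PNs PNt.
rewrite vnorm_add vnorm_ev in Skc; rewrite vnorm_add vnorm_ev in Pkc.
rewrite vnorm_add vnorm_ev in Plc; rewrite !vnorm_add !vnorm_ev in PNc.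
have HG := G.1; move/inC2rP: HG => HG.
rewrite /alpha.
set ak := (Phi c n (vadd m (ev k)))`_0.
set al := (Phi c n (vadd m (ev l)))`_0.
set aN := (Phi c n (vadd (vadd m (ev l)) (ev k)))`_0.
set D := Phi c n (vadd m (ev k)) - Phi c n (vadd m (ev l)).
have HD : D = D`_0 *: PhiS c n m.
  apply: (PhiSU hr G).
  - apply: size_le_pred; first exact: size_sub_le.
    by rewrite coefB Pkt Plt subrr.
  - move=> i k' Hk; rewrite /D M_sub.
    have -> : k' + vnorm m = (k' - 1) + (vnorm m + 1) by ring.
    rewrite Pkc ?Plc ?subrr //; move: Hk; vz.
have EqA : M c l (Phi c n (vadd m (ev k))) (- m l + vnorm m)
    = (ak - al) * M c l (PhiS c n m) (- m l + vnorm m).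
  have : M c l D (- m l + vnorm m) = M c l (Phi c n (vadd m (ev k))) (- m l + vnorm m).
    rewrite /D M_sub.
    have -> : - m l + vnorm m = (- m l - 1) + (vnorm m + 1) by ring.
    rewrite (Plc l (- m l - 1)) ?subr0 //; have := HG l; vz.
  by move <-; rewrite HD M_scale /ak /al coefB.
set E := Phi c n (vadd (vadd m (ev l)) (ev k)) - aN *: PhiS c n (vadd m (ev k)).
have E0 : E`_0 = 0 by rewrite coefB coefZ Skt mulr1 subrr.
have [E' [EE HE's]] := Xdiv E0.
have HEs : (size E <= (dimT n m).+3)%N.
  by apply: size_sub_le => //; apply: size_scale_le; apply: leq_trans Sks _.
have HE' : E' = E'`_(dimT n (vadd m (ev k))) *: Phi c n (vadd m (ev k)).
  apply: (PhiU hr Gk).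
  - by rewrite Dk; apply: leq_trans HE's _; rewrite -ltnS; case: (size E) HEs.
  - move=> i k' Hk.
    have : M c i E (k' + (vnorm m + 1 + 1)) = 0.
      rewrite /E M_sub M_scale PNc; last by move: Hk; vz.
      have -> : k' + (vnorm m + 1 + 1) = (k' + 1) + (vnorm m + 1) by ring.
      by rewrite Skc ?mulr0 ?subrr //; move: Hk; vz.
    rewrite EE M_X vnorm_add vnorm_ev.
    by have -> : k' + (vnorm m + 1 + 1) - 1 = k' + (vnorm m + 1) by ring.
have E'N : E'`_(dimT n (vadd m (ev k))) = 1.
  have : E`_(dimT n m).+2 = 1.
    by rewrite /E coefB coefZ PNt nth_default ?mulr0 ?subr0 //.
  by rewrite EE coefXM /= Dk.
rewrite E'N scale1r in HE'.
have EqB : M c l (Phi c n (vadd m (ev k))) (- m l + vnorm m)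
    = - aN * M c l (PhiS c n (vadd m (ev k))) (- m l + vnorm m + 1).
  have : M c l E (- m l + vnorm m + 1) = M c l (Phi c n (vadd m (ev k))) (- m l + vnorm m).
    rewrite EE M_X HE'.
    by have -> : - m l + vnorm m + 1 - 1 = - m l + vnorm m by ring.
  move <-; rewrite /E M_sub M_scale.
  have -> : - m l + vnorm m + 1 = (- m l - 1) + (vnorm m + 1 + 1) by ring.
  rewrite (PNc l (- m l - 1)); last by have := HG l; vz.
  have -> : - m l - 1 + (vnorm m + 1 + 1) = - m l + vnorm m + 1 by ring.
  ring.
have den := den_m hr G Gl (j := l).
rewrite etacE mulrA; apply: (canRL (mulfK den)).
have := EqA; rewrite EqB => H.
transitivity (- ((ak - al) * M c l (PhiS c n m) (- m l + vnorm m))); first ring.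
by rewrite -H; ring.
Qed.

Lemma id4' n m k l : k != l -> good c n m -> good c n (vsub m (ev k)) -> good c n (vadd m (ev k)) ->
  good c n (vadd m (ev l)) -> good c n (vsub (vadd m (ev l)) (ev k)) ->
  sigma c n m k * etac c k l n m
    = sigma c n (vadd m (ev l)) k * etac c k l n (vsub m (ev k)).
Proof.
move=> kl G G' Gk Gl GU.
have lk : l != k by rewrite eq_sym.
have HG := G.1; move/inC2rP: HG => HG.
have HG' := G'.1; move/inC2rP: HG' => HG'.
case: (PhiSP hr G) => Ss St Sc; case: (PhiSP hr Gk) => Sks Skt Skc.
rewrite vnorm_add vnorm_ev in Skc.
have R1 := G3' kl G Gk Gl.
have G'k : good c n (vadd (vsub m (ev k)) (ev k)) by rewrite vsubK.
have G'l : good c n (vadd (vsub m (ev k)) (ev l)) by rewrite vsubaddC.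
have R2 := G3' kl G' G'k G'l.
rewrite vsubK vsubaddC in R2.
set A := M c k (PhiS c n m) (- m k + vnorm m).
set B := M c k (PhiS c n (vsub m (ev k))) (- m k + vnorm m).
set F := M c k (PhiS c n (vadd m (ev l))) (- m k + vnorm m + 1).
set Gv := M c k (PhiS c n (vsub (vadd m (ev l)) (ev k))) (- m k + vnorm m + 1).
have HA : - F = etac c k l n m * A.
  have := congr1 (fun p => M c k p (- m k + vnorm m + 1)) R1.
  rewrite /= M_sub M_scale M_X.
  have -> : - m k + vnorm m + 1 - 1 = - m k + vnorm m by ring.
  rewrite -addrA (Skc k (- m k)) ?sub0r ?addrA //; have := HG k; vz.
have HB : - Gv = etac c k l n (vsub m (ev k)) * B.
  have := congr1 (fun p => M c k p (- m k + vnorm m + 1)) R2.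
  rewrite /= M_sub M_scale M_X.
  have -> : - m k + vnorm m + 1 - 1 = - m k + vnorm m by ring.
  have S0 : M c k (PhiS c n m) (- m k + vnorm m + 1) = 0.
    have -> : - m k + vnorm m + 1 = (- m k + 1) + vnorm m by ring.
    apply: Sc; have := HG' k; vz.
  by rewrite S0 sub0r.
have Bn : B != 0.
  have := den_m hr G' G'k (j := k); rewrite vsub_eq vnorm_sub vnorm_ev.
  by have -> : - (m k - 1) + (vnorm m - 1) = - m k + vnorm m by ring.
have Gn : Gv != 0.
  have GUk : good c n (vadd (vsub (vadd m (ev l)) (ev k)) (ev k)) by rewrite vsubK.
  have := den_m hr GU GUk (j := k); rewrite vsub_eq vadd_neq // vnorm_sub vnorm_add !vnorm_ev.
  by have -> : - (m k - 1) + (vnorm m + 1 - 1) = - m k + vnorm m + 1 by ring.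
rewrite (@sigmaE _ _ c n m k) ?G'.1 // (@sigmaE _ _ c n (vadd m (ev l)) k); last first.
  by rewrite -vsubaddC; exact: G'l.1.
rewrite vadd_neq // vnorm_add vnorm_ev addrA -/A -/B -/F -/Gv.
have Hg : etac c k l n (vsub m (ev k)) = - Gv / B by rewrite HB mulfK.
rewrite Hg; transitivity (- F / B).
  by rewrite HA; ring.
by rewrite !mulNr mulrN mulrA divfK.
Qed.

End S7.

Theorem theorem6p3 (R : realType) (r : nat) (hr : (0 < r)%N)
    (c : int -> 'I_r -> R[i]) (n m : mi r) (k l : 'I_r) (hkl : k != l) :
  (* (1) *)
  ((good c n m /\ (forall j, inC2r (vsub n (ev j)) m -> normal c (vsub n (ev j)) m)) ->
     alpha c n m * beta c n m + \sum_(j < r) rho c n m j = 1) /\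
  (* (2) *)
  ((good c n m /\ good c (vadd n (ev k)) m /\ good c (vadd n (ev l)) m) ->
     alpha c (vadd n (ev k)) m - alpha c (vadd n (ev l)) m
       = alpha c n m * gamma c k l n m) /\
  (* (3) *)
  ((good c n m /\ good c (vadd n (ev k)) m /\ good c (vadd n (ev l)) m /\
    good c (vadd (vadd n (ev l)) (ev k)) m) ->
     beta c (vadd n (ev l)) m - beta c (vadd n (ev k)) m
       = beta c (vadd (vadd n (ev l)) (ev k)) m * gamma c k l n m) /\
  (* (4) *)
  ((good c n m /\ good c (vsub n (ev k)) m /\ good c (vadd n (ev k)) m /\ good c (vadd n (ev l)) m /\
    good c (vsub (vadd n (ev l)) (ev k)) m) ->
     rho c n m k * gamma c k l n m
       = rho c (vadd n (ev l)) m k * gamma c k l (vsub n (ev k)) m) /\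
  (* (1') *)
  ((good c n m /\ (forall j, inC2r n (vsub m (ev j)) -> normal c n (vsub m (ev j)))) ->
     alpha c n m * beta c n m + \sum_(j < r) sigma c n m j = 1) /\
  (* (2') *)
  ((good c n m /\ good c n (vadd m (ev k)) /\ good c n (vadd m (ev l)) /\
    good c n (vadd (vadd m (ev l)) (ev k))) ->
     alpha c n (vadd m (ev l)) - alpha c n (vadd m (ev k))
       = alpha c n (vadd (vadd m (ev l)) (ev k)) * etac c k l n m) /\
  (* (3') *)
  ((good c n m /\ good c n (vadd m (ev k)) /\ good c n (vadd m (ev l))) ->
     beta c n (vadd m (ev k)) - beta c n (vadd m (ev l))
       = beta c n m * etac c k l n m) /\
  (* (4') *)
  ((good c n m /\ good c n (vsub m (ev k)) /\ good c n (vadd m (ev k)) /\ good c n (vadd m (ev l)) /\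
    good c n (vsub (vadd m (ev l)) (ev k))) ->
     sigma c n m k * etac c k l n m
       = sigma c n (vadd m (ev l)) k * etac c k l n (vsub m (ev k))).
Proof.
split; first by case=> G Hn; exact: (@id1 _ _ hr c n m G Hn).
split; first by case=> G [Gk Gl]; exact: (@id2 _ _ hr c n m k l hkl G Gk Gl).
split; first by case=> G [Gk [Gl GN]]; exact: (@id3 _ _ hr c n m k l hkl G Gk Gl GN).
split; first by case=> G [G' [Gk [Gl GU]]]; exact: (@id4 _ _ hr c n m k l hkl G G' Gk Gl GU).
split; first by case=> G Hn; exact: (@id1' _ _ hr c n m G Hn).
split; first by case=> G [Gk [Gl GN]]; exact: (@id2' _ _ hr c n m k l hkl G Gk Gl GN).
split; first by case=> G [Gk Gl]; exact: (@id3' _ _ hr c n m k l hkl G Gk Gl).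
by case=> G [G' [Gk [Gl GU]]]; exact: (@id4' _ _ hr c n m k l hkl G G' Gk Gl GU).
Qed.
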